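(* Let $D$ be a regular $(v,k,\lambda,\mu)$-PDS in a finite group $G$ with $0<\mu<k$, and assume $\sqrt\Delta$ is an integer. Let $\xi$ be a nonprincipal linear character of $G$ of prime order $p$ with kernel $N$. Then $p\mid k-\xi(D)$, \[|N\cap D|=\frac{k-\xi(D)}{p}+\xi(D),\] and $|Na\cap D|=\frac{k-\xi(D)}{p}$ for every $a\in G\setminus N$.
   Context: A $(v,k,\lambda,\mu)$-PDS in a group $G$ of order $v$ is a $k$-subset $D$ such that every nonidentity element of $D$ is $xy^{-1}$ ($x,y\in D$) in exactly $\lambda$ ways and every nonidentity element of $G\setminus D$ in exactly $\mu$ ways; regular means $D=D^{(-1)}$ and $1\notin D$. $\Delta=(\lambda-\mu)^2+4(k-\mu)$; $\chi(D)=\sum_{d\in D}\chi(d)$. *)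

(* Defs.v *)
From mathcomp Require Import all_boot all_order all_algebra all_fingroup all_solvable all_field all_character.
Set Implicit Arguments. Unset Strict Implicit. Unset Printing Implicit Defensive.
Import GRing.Theory Num.Theory.

Local Open Scope group_scope.

Definition pds_count (gT : finGroupType) (D : {set gT}) (g : gT) : nat :=
  #|[set u in setX D D | u.1 * u.2^-1 == g]|.

Definition is_PDS (gT : finGroupType) (G : {group gT}) (D : {set gT})
    (v k lam mu : nat) : Prop :=
  [/\ D \subset G, #|G| = v, #|D| = k &
      forall g, g \in G -> g != 1 ->
        pds_count D g = (if g \in D then lam else mu)].

Definition is_regular_PDS (gT : finGroupType) (G : {group gT}) (D : {set gT})
    (v k lam mu : nat) : Prop :=
  [/\ is_PDS G D v k lam mu, D^-1 = D & 1 \notin D].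

Definition pds_Delta (k lam mu : nat) : int :=
  ((lam%:Z - mu%:Z) ^+ 2 + 4 * (k%:Z - mu%:Z))%R.

Definition cf_set (gT : finGroupType) (G : {group gT}) (chi : 'CF(G)) (D : {set gT}) : algC :=
  (\sum_(d in D) chi d)%R.

(* Main.v *)
Require Import Defs.
From mathcomp Require Import all_boot all_order all_algebra all_fingroup all_solvable all_field all_character.
From mathcomp Require Import ring zify.
Import GRing.Theory Num.Theory.
Set Implicit Arguments. Unset Strict Implicit. Unset Printing Implicit Defensive.
Local Open Scope ring_scope.
Lemma horner_rat_poly (n : nat) (a : nat -> rat) (z : algC) :
  (map_poly (@ratr algC) (\poly_(i < n) a i)).[z] = \sum_(i < n) ratr (a i) * z ^+ i.
Proof.
rewrite (horner_coef_wide _ (n:=n)); last by rewrite size_map_poly size_poly.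
by apply: eq_bigr => i _; rewrite coef_map coef_poly ltn_ord.
Qed.

Lemma cyc_eq (p : nat) (z : algC) (c : nat -> int) : prime p -> p.-primitive_root z ->
  \sum_(i < p) (c i)%:~R * z ^+ i = 0 -> forall i, (i < p)%N -> c i = c 0%N.
Proof.
move=> pr_p prim_z sum0.
have p_gt1 := prime_gt1 pr_p.
have [pf [Dpf mon] dv] := minCpolyP z.
have size_pf : size pf = p.
  rewrite -(size_map_poly (@ratr algC)) -Dpf (minCpoly_cyclotomic prim_z).
  by rewrite size_cyclotomic totient_prime // prednK // prime_gt0.
pose Q : {poly rat} := \poly_(i < p) 1.
pose q : {poly rat} := \poly_(i < p) (c i)%:~R.
have sizeQ : size Q = p by rewrite size_poly_eq // oner_eq0.
have z1 : z != 1.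
  apply/eqP=> z1; have := prim_order_dvd prim_z 1; rewrite expr1 z1 eqxx.
  by move/dvdn_leq => /(_ isT); rewrite leqNgt p_gt1.
have dQ : pf %| Q.
  rewrite -dv; apply/rootP; rewrite horner_rat_poly.
  have := subrX1 z p; rewrite prim_expr_order // subrr => /esym/eqP.
  rewrite mulf_eq0 subr_eq0 (negbTE z1) /= => /eqP S0.
  by under eq_bigr do rewrite rmorph1 mul1r.
have dq : pf %| q.
  rewrite -dv; apply/rootP; rewrite horner_rat_poly -[RHS]sum0.
  by apply: eq_bigr => i _; rewrite rmorph_int.
have eQ : pf %= Q by rewrite -dvdp_size_eqp // size_pf sizeQ.
have Qq : Q %| q by rewrite -(eqp_dvdl _ eQ).
have cq : forall i, (i < p)%N -> q`_i = (c i)%:~R by move=> i ip; rewrite coef_poly ip.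
have key : forall i, (i < p)%N -> q`_i = q`_0.
  have [->|nzq] := eqVneq q 0; first by move=> i _; rewrite !coef0.
  have : Q %= q by rewrite -dvdp_size_eqp // eqn_leq dvdp_leq // sizeQ size_poly.
  case/eqpP=> [[c1 c2] /andP[/= nz1 nz2] E] i ip.
  have Ei j : (j < p)%N -> q`_j = c1 / c2.
    move=> jp; have := congr1 (fun r : {poly rat} => r`_j) E.
    rewrite /= !coefZ [Q`_j]coef_poly jp mulr1 => ->.
    by rewrite mulrC mulKf.
  by rewrite !Ei // prime_gt0.
move=> i ip; apply: (@intr_inj rat); rewrite -!cq ?prime_gt0 //; exact: key.
Qed.
Lemma cfX_eval (gT : finGroupType) (G : {group gT}) (phi : 'CF(G)) n x :
  x \in G -> (phi ^+ n) x = phi x ^+ n.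
Proof.
move=> Gx; elim: n => [|n IH]; first by rewrite !expr0 cfun1E Gx.
by rewrite !exprS cfunE IH.
Qed.

Lemma lin_nonprinc (gT : finGroupType) (G : {group gT}) (xi : 'CF(G)) :
  xi != 1 -> exists2 g, g \in G & xi g != 1.
Proof.
move=> nx; case: (boolP [exists g in G, xi g != 1]) => [/exists_inP//|/exists_inP H].
case/negP: nx; apply/eqP/cfun_inP => g Gg; rewrite cfun1E Gg.
by apply/eqP; apply: contraT => ng; case: H; exists g.
Qed.

Lemma sum_lin0 (gT : finGroupType) (G : {group gT}) (xi : 'CF(G)) :
  xi \is a linear_char -> xi != 1 -> \sum_(g in G) xi g = 0.
Proof.
move=> lin nx; have [g0 Gg0 ng0] := lin_nonprinc nx.
set S := \sum_(g in G) xi g.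
have ES : S = xi g0 * S.
  rewrite {1}/S (reindex_inj (mulgI g0)) /= /S mulr_sumr.
  apply: eq_big => [g|g Gg]; [exact: groupMl | by rewrite (lin_charM lin) // -(groupMl _ Gg0)].
have : (1 - xi g0) * S = 0 by rewrite mulrBl mul1r -ES subrr.
move/eqP; rewrite mulf_eq0 subr_eq0 eq_sym (negbTE ng0) /=; exact/eqP.
Qed.

Lemma pds_count1 (gT : finGroupType) (D : {set gT}) : pds_count D 1%g = #|D|.
Proof.
rewrite /pds_count -(card_imset D (f := fun x => (x, x))); last by move=> x y [].
apply: eq_card => -[a b]; rewrite !inE /= -eq_mulgV1.
apply/idP/imsetP => [/andP[/andP[aD bD] /eqP <-]|[x xD [-> ->]]].
  by exists a.
by rewrite xD eqxx.
Qed.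

Lemma pds_quad (gT : finGroupType) (G : {group gT}) (D : {set gT}) v k lam mu (xi : 'CF(G)) :
  is_PDS G D v k lam mu -> (D^-1)%g = D -> (1%g \notin D) ->
  xi \is a linear_char -> xi != 1 ->
  cf_set xi D ^+ 2 = (lam%:R - mu%:R) * cf_set xi D + (k%:R - mu%:R).
Proof.
move=> [sDG _ cD hpds] DV D1 lin nx.
set X := cf_set xi D.
have XV : X = \sum_(y in D) xi (y^-1)%g.
  rewrite /X /cf_set (reindex_inj invg_inj) /=; apply: eq_bigl => y.
  by rewrite -mem_invg DV.
have E1 : X ^+ 2 = \sum_(u in setX D D) xi (u.1 * u.2^-1)%g.
  rewrite expr2 {2}XV /X /cf_set big_distrlr pair_big /=.
  apply: eq_big => [[a b]|[a b]]; first by rewrite in_setX.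
  move=> /= /andP[aD bD].
  by rewrite (lin_charM lin) ?groupV ?(subsetP sDG).
have E2 : X ^+ 2 = \sum_(g in G) xi g *+ pds_count D g.
  rewrite E1 (partition_big (fun u => (u.1 * u.2^-1)%g) (mem G)) /=; last first.
    by move=> [a b]; rewrite in_setX => /andP[aD bD]; rewrite groupM ?groupV ?(subsetP sDG).
  apply: eq_bigr => g Gg; rewrite /pds_count -sumr_const.
  apply: eq_big => [u|u]; first by rewrite !inE.
  by move=> /andP[_ /eqP ->].
have S1 : \sum_(g | (g \in G) && (g != 1%g)) xi g = -1.
  have := sum_lin0 lin nx; rewrite (bigD1 1%g) //= (lin_char1 lin) => /eqP.
  by rewrite addrC addr_eq0 => /eqP.
rewrite E2 (bigD1 1%g) //= pds_count1 cD (lin_char1 lin).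
rewrite (eq_bigr (fun g => mu%:R * xi g + (if g \in D then (lam%:R - mu%:R) * xi g else 0))); last first.
  move=> g /andP[Gg ng]; rewrite hpds //; case: (g \in D); rewrite -mulr_natr; ring.
rewrite big_split /= -mulr_sumr S1 -big_mkcondr /= -mulr_sumr.
have -> : \sum_(i | ((i \in G) && (i != 1%g)) && (i \in D)) xi i = X.
  rewrite /X /cf_set; apply: eq_bigl => g; case gD: (g \in D); rewrite ?andbF ?andbT //.
  rewrite (subsetP sDG) //=; by apply: contraNneq D1 => <-.
ring.
Qed.

Unset Implicit Arguments.

Theorem mainTheorem3 (gT : finGroupType) (G : {group gT}) (D : {set gT})
    (v k lam mu : nat) (xi : 'CF(G)) (p : nat) :
  is_regular_PDS G D v k lam mu ->
  (0 < mu)%N -> (mu < k)%N ->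
  (exists s : int, (s ^+ 2)%R = pds_Delta k lam mu) ->
  xi \is a linear_char -> xi != 1%R -> prime p -> #[xi]%CF = p ->
  exists m : int,
    [/\ cf_set xi D = (m%:~R)%R,
        (p%:Z %| k%:Z - m)%Z,
        #|cfker xi :&: D|%:Z = (((k%:Z - m) %/ p%:Z)%Z + m)%R &
        forall a, a \in G -> a \notin cfker xi ->
          #|(cfker xi :* a)%g :&: D|%:Z = ((k%:Z - m) %/ p%:Z)%Z].
Proof.
move=> [P DV D1] mu0 muk [s Hs] lin nx pr_p ordp.
have [sDG _ cD hpds] := P.
have p_gt1 := prime_gt1 pr_p.
have [g0 Gg0 ng0] := lin_nonprinc nx.
set z := xi g0.
have unity : forall x, x \in G -> xi x ^+ p = 1.
  by move=> x Gx; rewrite -cfX_eval // -ordp exp_cforder cfun1E Gx.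
have prim_z : p.-primitive_root z.
  have [m pm mp] := prim_order_exists (prime_gt0 pr_p) (unity g0 Gg0).
  case/primeP: pr_p => _ /(_ m mp) /orP[/eqP m1|/eqP mp']; last by rewrite -mp'.
  by subst m; have := prim_expr_order pm; rewrite expr1 => z1; rewrite z1 eqxx in ng0.
have idx : forall x, x \in G -> exists i : 'I_p, xi x = z ^+ i.
  by move=> x Gx; have [i ->] := prim_rootP prim_z (unity x Gx); exists i.
pose n (i : nat) := #|[set d in D | xi d == z ^+ i]|.
have part : forall F : gT -> algC,
    \sum_(d in D) F d = \sum_(i < p) \sum_(d in [set d in D | xi d == z ^+ i]) F d.
  move=> F; rewrite (exchange_big_dep (mem D)) /=; last by move=> i d _; rewrite inE => /andP[].
  apply: eq_bigr => d dD; have [i0 Ei0] := idx d (subsetP sDG d dD).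
  rewrite (big_pred1 i0) // => i /=; rewrite inE dD /= Ei0 (eq_prim_root_expr prim_z).
  by rewrite !modn_small // eq_sym.
have Xn : cf_set xi D = \sum_(i < p) (n i)%:R * z ^+ i.
  rewrite /cf_set part; apply: eq_bigr => i _.
  rewrite (eq_bigr (fun _ => z ^+ i)); last by move=> d; rewrite inE => /andP[_ /eqP].
  by rewrite sumr_const mulr_natl.
have kn : k = (\sum_(i < p) n i)%N.
  apply/eqP; rewrite -(eqr_nat algC) natr_sum -cD -sumr_const part.
  by apply/eqP; apply: eq_bigr => i _; rewrite sumr_const.
have Hq := pds_quad P DV D1 lin nx.
set X := cf_set xi D in Hq Xn *.
have Hs' : (s%:~R : algC) ^+ 2 = (lam%:R - mu%:R) ^+ 2 + 4 * (k%:R - mu%:R).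
  have := congr1 (fun w : int => (w%:~R : algC)) Hs; rewrite /pds_Delta /=.
  rewrite !rmorphXn !rmorphD !rmorphM !rmorphB /= => ->.
  by rewrite expr2.
have [r Hr] : exists r : int, 2 * X = r%:~R.
  have H0 : (2 * X - (lam%:R - mu%:R) - s%:~R) * (2 * X - (lam%:R - mu%:R) + s%:~R) = 0.
    have -> : (2 * X - (lam%:R - mu%:R) - s%:~R) * (2 * X - (lam%:R - mu%:R) + s%:~R)
      = 4 * (X ^+ 2 - ((lam%:R - mu%:R) * X + (k%:R - mu%:R)))
        - ((s%:~R : algC) ^+ 2 - ((lam%:R - mu%:R) ^+ 2 + 4 * (k%:R - mu%:R))) by ring.
    by rewrite Hq Hs' !subrr mulr0 subr0.
  move/eqP: H0; rewrite mulf_eq0 => /orP[] /eqP H.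
    exists (lam%:Z - mu%:Z + s); rewrite rmorphD rmorphB /=.
    by rewrite -[LHS]subr0 -H; ring.
  exists (lam%:Z - mu%:Z - s); rewrite !rmorphB /=.
  by rewrite -[LHS]subr0 -H; ring.
pose c (i : nat) : int := (n i)%:Z * 2 - (nat_of_bool (i == 0%N))%:Z * r.
have o0 : (0 < p)%N := prime_gt0 pr_p.
have csum : \sum_(i < p) (c i)%:~R * z ^+ i = 0.
  rewrite (eq_bigr (fun i : 'I_p => 2 * ((n i)%:R * z ^+ i) - (if i == 0%N :> nat then r%:~R else 0))); last first.
    move=> i _; rewrite /c rmorphB !rmorphM /=.
    by case: (i == 0%N :> nat) /eqP => [->|_]; rewrite /= ?expr0; ring.
  rewrite sumrB -mulr_sumr -Xn Hr (bigD1 (Ordinal o0)) //= big1 ?addr0 ?subrr //.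
  move=> i ni; case: eqP => // Hi; case/negP: ni; apply/eqP; apply: val_inj; exact: Hi.
have cc := cyc_eq pr_p prim_z csum.
have n1eq : forall i, (0 < i < p)%N -> n i = n 1%N.
  move=> i /andP[i0 ip]; have := cc i ip; have := cc 1%N p_gt1.
  rewrite /c /= ?eqxx (negbTE (lt0n_neq0 i0)) /=; lia.
have r_eq : r = ((n 0%N)%:Z - (n 1%N)%:Z) * 2.
  by have := cc 1%N p_gt1; rewrite /c /= ?eqxx; lia.
have Xm : X = ((n 0%N)%:Z - (n 1%N)%:Z)%:~R.
  have : 2 * (X - ((n 0%N)%:Z - (n 1%N)%:Z)%:~R) = 0.
    by rewrite mulrBr Hr r_eq rmorphM /=; ring.
  move/eqP; rewrite mulf_eq0 pnatr_eq0 /= subr_eq0 => /eqP //.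
have kn' : k = (n 0%N + (p - 1) * n 1%N)%N.
  rewrite kn (bigD1 (Ordinal o0)) //=; congr (_ + _)%N.
  rewrite (eq_bigr (fun _ => n 1%N)); last first.
    move=> i ni; apply: n1eq; rewrite ltn_ord andbT lt0n.
    by apply: contra ni => /eqP Hi; apply/eqP; apply: val_inj.
  rewrite sum_nat_const cardC1 card_ord; lia.
have km : (k%:Z - ((n 0%N)%:Z - (n 1%N)%:Z)) = (n 1%N)%:Z * p%:Z by rewrite kn'; lia.
exists ((n 0%N)%:Z - (n 1%N)%:Z); split => //.
- by apply/dvdzP; exists (n 1%N)%:Z.
- rewrite km mulzK; last by rewrite eqz_nat -lt0n.
  have -> : cfker xi :&: D = [set d in D | xi d == z ^+ 0%N].
    apply/setP => d; rewrite (cfkerEchar (lin_charW lin)) !inE (lin_char1 lin) expr0.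
    case dD: (d \in D); rewrite ?andbF ?andbT //= (subsetP sDG) //.
  rewrite -/(n 0%N); lia.
- move=> a Ga Na; rewrite km mulzK; last by rewrite eqz_nat -lt0n.
  have [j Ej] := idx a Ga.
  have nz := lin_char_neq0 lin Ga.
  have -> : (cfker xi :* a)%g :&: D = [set d in D | xi d == z ^+ j].
    apply/setP => d; rewrite (cfkerEchar (lin_charW lin)) !inE mem_rcoset !inE (lin_char1 lin).
    case dD: (d \in D); rewrite ?andbF ?andbT //=.
    have Gd := subsetP sDG d dD.
    rewrite groupM ?groupV //= (lin_charM lin) ?groupV // (lin_charV lin) // -Ej.
    apply/eqP/eqP => [H|->]; last by rewrite mulfV.
    by rewrite -(divfK nz (xi d)) H mul1r.
  rewrite -/(n j) n1eq // ltn_ord andbT lt0n.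
  apply: contra Na => /eqP j0; rewrite (cfkerEchar (lin_charW lin)) inE Ga (lin_char1 lin) /=.
  by rewrite Ej j0 expr0.
Qed.
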